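(* Let $k$ be a field, $r \ge 1$, $s \le r$, and $x_1,\dots,x_r \in k$. For $1 \le j \le r$ and $d \ge 0$, let $e^d_{r,j}$ be the elementary symmetric polynomial of degree $d$ in the $r-1$ variables $x_1,\dots,x_r$ with $x_j$ omitted, and let $A_r^s(x_1,\dots,x_r)$ be the $s \times r$ matrix whose $(d+1,j)$ entry is $e^d_{r,j}(x_1,\dots,x_r)$ for $0 \le d \le s-1$, $1 \le j \le r$. Then $A_r^s(x_1,\dots,x_r)$ has full rank (rank $s$) if and only if $\#\{x_1,\dots,x_r\} \ge s$. *)

(* Defs.v *)
From mathcomp Require Import all_boot all_order all_algebra.
Set Implicit Arguments. Unset Strict Implicit. Unset Printing Implicit Defensive.
Import GRing.Theory.
Local Open Scope ring_scope.

Definition esym_omit (F : fieldType) (r : nat) (x : 'I_r -> F) (j : 'I_r)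
  (d : nat) : F :=
  \sum_(S : {set 'I_r} | (S \subset [set~ j]) && (#|S| == d))
     \prod_(i in S) x i.

Definition Amat (F : fieldType) (r s : nat) (x : 'I_r -> F) : 'M[F]_(s, r) :=
  \matrix_(d < s, j < r) esym_omit x j d.

(* Main.v *)
Require Import Defs.
From mathcomp Require Import all_boot all_order all_algebra.
Set Implicit Arguments. Unset Strict Implicit. Unset Printing Implicit Defensive.
Import GRing.Theory.
Local Open Scope ring_scope.

Section S.
Variables (F : fieldType) (r : nat) (x : 'I_r -> F).

Definition E (W : {set 'I_r}) (d : nat) : F :=
  \sum_(S : {set 'I_r} | (S \subset W) && (#|S| == d)) \prod_(i in S) x i.

Lemma Erec (W : {set 'I_r}) (j : 'I_r) (d : nat) : j \in W -> E W d.+1 = E (W :\ j) d.+1 + x j * E (W :\ j) d.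
Proof.
move=> jW; rewrite /E (bigID (fun S : {set 'I_r} => j \in S)) /= addrC.
congr (_ + _).
  apply: eq_bigl => S; rewrite subsetD1; by case: (S \subset W); case: (j \in S); case: (#|S| == d.+1).
rewrite mulr_sumr (reindex_onto (fun S => j |: S) (fun S => S :\ j)) /=; last first.
  by move=> S /andP[_ jS]; rewrite setD1K.
apply: eq_big => S.
  rewrite setU11 andbT subsetD1 subUset sub1set jW /=.
  case: (boolP (j \in S)) => jS /=.
    have -> : ((j |: S) :\ j == S) = false.
      by apply/negbTE/eqP => h; move: jS; rewrite -h !inE eqxx.
    by rewrite !andbF.
  by rewrite setU1K // eqxx !andbT cardsU1 jS add1n eqSS.
move=> /andP[_ /eqP h].
have jS : j \notin S by rewrite -h !inE eqxx.
by rewrite big_setU1.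
Qed.

Lemma E0 (W : {set 'I_r}) : E W 0 = 1.
Proof.
rewrite /E (big_pred1 set0) ?big_set0 //.
move=> S /=; rewrite cards_eq0; case: eqP => [->|]; first by rewrite sub0set.
by rewrite andbF.
Qed.

Lemma esymE (j : 'I_r) (d : nat) :
  esym_omit x j d = \sum_(k < d.+1) (- x j) ^+ k * E setT (d - k).
Proof.
have eT : esym_omit x j =1 E (setT :\ j) by move=> e; rewrite /E setTD.
elim: d => [|d IH].
  by rewrite eT big_ord1 !E0 expr0 mul1r.
have h := Erec d (in_setT j).
rewrite eT big_ord_recl expr0 mul1r subn0 h.
have -> : \sum_(i < d.+1) (- x j) ^+ lift ord0 i * E setT (d.+1 - lift ord0 i)
   = - x j * E (setT :\ j) d.
  by rewrite -eT IH mulr_sumr; apply: eq_bigr => i _; rewrite /= exprS subSS mulrA.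
by rewrite mulNr addrK.
Qed.

Definition Lmx s : 'M[F]_s :=
  \matrix_(d < s, k < s) if (k <= d)%N then E setT (d - k) else 0.
Definition Vmx s : 'M[F]_(s, r) := \matrix_(k < s, j < r) (- x j) ^+ k.

Lemma AmatE s : Amat s x = Lmx s *m Vmx s.
Proof.
apply/matrixP => d j; rewrite !mxE esymE.
rewrite (big_ord_widen s (fun k => (- x j) ^+ k * E setT (d - k))) ?ltn_ord //.
rewrite big_mkcond /=; apply: eq_bigr => k _; rewrite !mxE ltnS.
by case: ifP => _; rewrite ?mul0r // mulrC.
Qed.

Lemma L_unit s : Lmx s \in unitmx.
Proof.
rewrite unitmxE det_trig; last first.
  by apply/is_trig_mxP => i k lt; rewrite mxE leqNgt lt.
by rewrite big1 ?unitr1 // => i _; rewrite mxE leqnn subnn E0.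
Qed.

Lemma rankA s : \rank (Amat s x) = \rank (Vmx s).
Proof.
rewrite AmatE; apply/eqP; rewrite eqn_leq; apply/andP; split.
  exact: mxrankM_maxr.
have {1}-> : Vmx s = invmx (Lmx s) *m (Lmx s *m Vmx s).
  by rewrite mulmxA mulVmx ?mul1mx // L_unit.
exact: mxrankM_maxr.
Qed.

Let u := undup [seq x i | i : 'I_r].

Lemma xin (j : 'I_r) : x j \in u.
Proof. by rewrite mem_undup; apply: map_f; rewrite mem_enum. Qed.

Lemma rankV_le s : (\rank (Vmx s) <= size u)%N.
Proof.
pose W : 'M[F]_(s, size u) := \matrix_(k < s, l < size u) (- u`_l) ^+ k.
pose R : 'M[F]_(size u, r) := \matrix_(l < size u, j < r) ((l : nat) == index (x j) u)%:R.
have -> : Vmx s = W *m R.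
  apply/matrixP => k j; rewrite !mxE.
  have lt : (index (x j) u < size u)%N by rewrite index_mem xin.
  rewrite (bigD1 (Ordinal lt)) //= big1 ?addr0.
    by rewrite !mxE eqxx mulr1 nth_index ?xin.
  move=> l /eqP nl; rewrite !mxE; case: eqP => [e|]; last by rewrite mulr0.
  by case: nl; apply: val_inj.
by apply: leq_trans (mxrankM_maxl _ _) (rank_leq_col _).
Qed.

Lemma rankV_ge s : (s <= size u)%N -> \rank (Vmx s) = s.
Proof.
move=> su.
have hf : forall k : 'I_s, exists j, x j == u`_k.
  move=> k; have : u`_k \in u by rewrite mem_nth // (leq_trans (ltn_ord k)).
  by rewrite mem_undup => /mapP[j _ ->]; exists j.
pose f k := xchoose (hf k).
pose S : 'M[F]_(r, s) := \matrix_(j < r, k < s) (j == f k)%:R.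
pose a : 'rV[F]_s := \row_k (- u`_k).
have VS : Vmx s *m S = Vandermonde s a.
  apply/matrixP => i k; rewrite !mxE (bigD1 (f k)) //= big1 ?addr0.
    by rewrite !mxE eqxx mulr1 (eqP (xchooseP (hf k))).
  by move=> j /negbTE nj; rewrite !mxE nj mulr0.
have uu : uniq u by apply: undup_uniq.
have : \rank (Vmx s *m S) = s.
  rewrite VS mxrank_unit // unitmxE det_Vandermonde unitfE.
  apply/prodf_neq0 => i _; apply/prodf_neq0 => j ij; rewrite !mxE subr_eq0.
  rewrite eqr_opp; apply/eqP => /eqP.
  rewrite nth_uniq // ?(leq_trans (ltn_ord _) su) // => /eqP e.
  by move: ij; rewrite e ltnn.
move=> h; apply/eqP; rewrite eqn_leq rank_leq_row /= -{1}h.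
exact: mxrankM_maxl.
Qed.

End S.

Theorem corollary2p4 (F : fieldType) (r s : nat) (x : 'I_r -> F) :
  (1 <= r)%N -> (s <= r)%N ->
  (\rank (Amat s x) = s <-> (s <= size (undup [seq x i | i : 'I_r]))%N).
Proof.
move=> _ _; rewrite rankA; split.
  by move=> h; rewrite -h; apply: rankV_le.
exact: rankV_ge.
Qed.
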